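(* Let $k<m\le kn$ be positive integers and let $I$ be an instance with $n$ agents and $m$ goods in a single category with cardinality constraint $k$, where each agent $i$ has an additive utility function $u_i:2^M\to\mathbb{R}_{\ge0}$ with $u_i(\emptyset)=0$ (not necessarily normalized). Let $\mathcal{A}^*=(A^*_1,\dots,A^*_n)$ be an allocation maximizing $\sum_i u_i(A_i)$ and let $S=\{i: |A^*_i|>k\}$. Suppose $0<u_i(M)\le 1$ for each $i\in S$ and $\sum_{i\in N\setminus S}u_i(A^*_i)\ge 1$. Then $$\frac{\text{OPT-USW}(I)}{\max_{\mathcal{A}\in \mathcal{C}_k(I)}\text{USW}(\mathcal{A})}\le \frac{1+\sum_{i\in S}u_i(A^*_i)}{1+k\sum_{i\in S}\frac{u_i(A^*_i)}{|A^*_i|}}\le \frac{1+s}{1+\frac{ks^2}{m-1}},$$ where $s=-1+\sqrt{1+\frac{m-1}{k}}$.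
   Context: An allocation is a partition $(A_1,\dots,A_n)$ of the goods $M$, agent $i$ receiving $A_i$; it is cardinal if $|A_i|\le k$ for all $i$, and $\mathcal{C}_k(I)$ denotes the set of cardinal allocations. $\text{USW}(\mathcal{A})=\sum_i u_i(A_i)$ and $\text{OPT-USW}(I)=\text{USW}(\mathcal{A}^* )$ is its maximum over all allocations. *)

(* Defs.v *)
From mathcomp Require Import all_boot all_order all_algebra.
Set Implicit Arguments. Unset Strict Implicit. Unset Printing Implicit Defensive.
Import Order.TTheory GRing.Theory Num.Theory.
Local Open Scope ring_scope.

(* Agents are 'I_n, goods are 'I_m (a single category).
   An additive utility profile is u : 'I_n -> 'I_m -> R, with u i g >= 0 the
   value of good g for agent i; u_i(A) = \sum_(g in A) u i g (so u_i(set0)=0).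
   An allocation (a partition of M into n, possibly empty, bundles) is encoded
   as a function assigning each good to the agent receiving it. *)

Definition allocation (n m : nat) := {ffun 'I_m -> 'I_n}.

Definition bundle (n m : nat) (a : allocation n m) (i : 'I_n) : {set 'I_m} :=
  [set g | a g == i].

Definition util (R : numDomainType) (n m : nat) (u : 'I_n -> 'I_m -> R)
  (i : 'I_n) (A : {set 'I_m}) : R := \sum_(g in A) u i g.

Definition USW (R : numDomainType) (n m : nat) (u : 'I_n -> 'I_m -> R)
  (a : allocation n m) : R := \sum_(i < n) util u i (bundle a i).

Definition cardinal (n m k : nat) (a : allocation n m) : bool :=
  [forall i : 'I_n, #|bundle a i| <= k]%N.

(* max_{A in C_k(I)} USW(A); utilities are nonnegative, so 0 is a neutral
   default for the (nonempty, since m <= k n) maximum. *)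
Definition max_card_USW (R : realDomainType) (n m k : nat)
  (u : 'I_n -> 'I_m -> R) : R :=
  \big[Num.max/0]_(a : allocation n m | cardinal k a) USW u a.

(* Main.v *)
Require Import Defs.
From mathcomp Require Import all_boot all_order all_algebra.
From mathcomp Require Import ring lra zify.
Import Order.TTheory GRing.Theory Num.Theory.
Local Open Scope ring_scope.

Lemma util_sub (R : numDomainType) n m (u : 'I_n -> 'I_m -> R) i (T A : {set 'I_m}) :
  (forall g, 0 <= u i g) -> T \subset A -> util u i T <= util u i A.
Proof.
move=> u0 /subsetP TA; rewrite /util [X in _ <= X]big_mkcond [X in X <= _]big_mkcond /=.
apply: ler_sum => g _; case: ifP => gT; first by rewrite (TA _ gT).
by case: ifP.
Qed.

Lemma count_part n m (f : 'I_m -> 'I_n) (P : pred 'I_n) (Q : pred 'I_m) :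
  (\sum_(i | P i) #|[set g | Q g && (f g == i)]|)%N = #|[set g | Q g && P (f g)]|.
Proof.
rewrite -sum1_card (partition_big f P) /=; last by move=> g; rewrite inE => /andP[].
apply: eq_bigr => i Pi; rewrite -sum1_card; apply: eq_bigl => g; rewrite !inE.
by case: eqP => [->|]; rewrite ?Pi ?andbT ?andbF.
Qed.


Lemma topk (R : realFieldType) n m (u : 'I_n -> 'I_m -> R) i (k : nat) :
  (0 < k)%N -> (forall g, 0 <= u i g) ->
  forall d (A : {set 'I_m}), #|A| = (k + d)%N ->
  exists T : {set 'I_m}, [/\ T \subset A, #|T| = k &
     k%:R * util u i A <= (k + d)%:R * util u i T].
Proof.
move=> k0 u0; elim=> [|d IH] A cA.
  by exists A; split => //; rewrite addn0 // in cA *.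
have [g0 g0A] : exists g0, g0 \in A.
  by apply/set0Pn; rewrite -card_gt0 cA; lia.
case: (arg_minP (u i) g0A) => g gA0 Hg.
have gA : g \in A by exact: gA0.
have cA' : #|A :\ g| = (k + d)%N by move: cA; rewrite (cardsD1 g A) gA /= add1n addnS => -[].
have [T [TA cT HT]] := IH _ cA'.
exists T; split => //.
  by apply: (subset_trans TA); apply: subsetDl.
have eA : util u i A = u i g + util u i (A :\ g) by rewrite /util (big_setD1 _ gA).
have Hc : (k + d).+1%:R * u i g <= util u i A.
  have -> : ((k+d).+1 = #|A|)%N by rewrite cA addnS.
  rewrite /util mulr_natl -sumr_const; apply: ler_sum => j jA; exact: Hg.
rewrite eA in Hc *.
set c := (k + d)%:R in HT cA' Hc *.
have c0 : 0 < c by rewrite /c ltr0n; lia.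
set x := util u i (A :\ g) in HT Hc *.
set y := util u i T in HT *.
have ug := u0 g.
have HS : (k + d.+1)%:R = c + 1 by rewrite /c addnS -addn1 natrD.
rewrite HS.
have HS' : (k + d).+1%:R = c + 1 by rewrite /c -addn1 natrD.
rewrite HS' in Hc.
have kk : 0 <= (k%:R : R) by [].
rewrite -(ler_pM2l c0).
nra.
Qed.


Lemma extend n m k : (m <= k * n)%N -> forall N (U : {set 'I_m}) (b : 'I_m -> 'I_n),
  #|U| = N -> (forall i, #|[set g | (g \notin U) && (b g == i)]| <= k)%N ->
  exists a : allocation n m, cardinal k a /\ (forall g, g \notin U -> a g = b g).
Proof.
move=> hm; elim=> [|N IH] U b cU Hb.
  have U0 : U = set0 by apply/eqP; rewrite -cards_eq0 cU.
  exists [ffun g => b g]; split; last by move=> g _; rewrite ffunE.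
  apply/forallP => i; rewrite /bundle.
  have -> : [set g | [ffun g => b g] g == i] = [set g | (g \notin U) && (b g == i)].
    by apply/setP => g; rewrite !inE ffunE U0 inE.
  exact: Hb.
have [g0 g0U] : exists g0, g0 \in U by apply/set0Pn; rewrite -card_gt0 cU.
have [i Hi] : exists i, (#|[set g | (g \notin U) && (b g == i)]| < k)%N.
  case: (boolP [exists i, (#|[set g | (g \notin U) && (b g == i)]| < k)%N]).
    by move/existsP.
  rewrite negb_exists => /forallP Hall.
  have H1 : (\sum_(i < n) k <= \sum_(i < n) #|[set g | (g \notin U) && (b g == i)]|)%N.
    by apply: leq_sum => j _; move: (Hall j); rewrite -leqNgt.
  rewrite (count_part _ _ b predT (fun g => g \notin U)) sum_nat_const card_ord in H1.
  have H2 : (#|[set g | (g \notin U) && predT (b g)]| <= #|[set~ g0]|)%N.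
    apply: subset_leq_card; apply/subsetP => g; rewrite !inE andbT.
    by apply: contraNneq => ->.
  rewrite cardsC1 card_ord in H2.
  have : (m > 0)%N by apply: leq_ltn_trans (ltn_ord g0).
  move=> ?. have H3 := leq_trans H1 H2. lia.
pose b' := fun g => if g == g0 then i else b g.
have cU' : #|U :\ g0| = N by move: cU; rewrite (cardsD1 g0 U) g0U add1n => -[].
have Hb' : forall j, (#|[set g | (g \notin U :\ g0) && (b' g == j)]| <= k)%N.
  move=> j.
  case: (eqVneq j i) => [->|ji].
    apply: leq_trans (_ : (#|g0 |: [set g | (g \notin U) && (b g == i)]| <= _)%N).
      apply: subset_leq_card; apply/subsetP => g; rewrite !inE /b'.
      by case: eqP => //= _ /andP[] /negPf ->.
    by rewrite cardsU1; lia.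
  apply: leq_trans (Hb j); apply: subset_leq_card; apply/subsetP => g; rewrite !inE /b'.
  case: eqP => [_|_]; first by rewrite eq_sym (negPf ji) andbF.
  by move=> /andP[] /= -> ->.
have [a [ca Ha]] := IH (U :\ g0) b' cU' Hb'.
exists a; split => // g gU.
rewrite Ha; last by rewrite !inE negb_and gU orbT.
by rewrite /b'; case: eqP => // ge; rewrite ge g0U in gU.
Qed.

Lemma divle (R : realFieldType) (a b c d : R) :
  0 < b -> 0 < d -> a * d <= c * b -> a / b <= c / d.
Proof. by move=> b0 d0 H; rewrite ler_pdivrMr // mulrAC ler_pdivlMr. Qed.

Lemma alg1 (R : realFieldType) (WN WS kB Mx : R) :
  1 <= WN -> 0 <= kB -> kB <= WS -> WN + kB <= Mx ->
  (WN + WS) / Mx <= (1 + WS) / (1 + kB).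
Proof.
move=> h1 h2 h3 h4; apply: divle; [lra|lra|].
have h5 : (1 + WS) * (WN + kB) <= (1 + WS) * Mx by apply: ler_wpM2l; lra.
nra.
Qed.

Lemma alg2 (R : realFieldType) (WS kB k D s : R) :
  0 < k -> 0 < D -> 0 <= WS -> k * WS ^+ 2 / D <= kB ->
  (1 + s) ^+ 2 = 1 + D / k -> 0 <= 1 + s ->
  (1 + WS) / (1 + kB) <= (1 + s) / (1 + k * s ^+ 2 / D).
Proof.
move=> k0 D0 W0 hB hs s0.
set q := k / D.
have q0 : 0 < q by rewrite /q divr_gt0.
have eq1 : k * WS ^+ 2 / D = q * WS ^+ 2 by rewrite /q mulrAC.
have eq2 : k * s ^+ 2 / D = q * s ^+ 2 by rewrite /q mulrAC.
rewrite eq1 in hB; rewrite eq2.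
have hq : q * s ^+ 2 + 2 * q * s = 1.
  have : q * (1 + s) ^+ 2 = q + 1.
    rewrite hs /q; field; apply/andP; split; rewrite gt_eqF //.
  move=> h; nra.
have hW : 0 <= q * WS ^+ 2 by nra.
have hs2 : 0 <= q * s ^+ 2 by nra.
apply: divle; [lra|lra|].
have h1 : (1 + s) * (1 + q * WS ^+ 2) <= (1 + s) * (1 + kB) by apply: ler_wpM2l; lra.
have h2 : 0 <= q * (1 + s) * (WS - s) ^+ 2.
  by apply: mulr_ge0; [apply: mulr_ge0; lra | apply: sqr_ge0].
nra.
Qed.

Lemma sum_lb (R : realFieldType) n (S : {set 'I_n}) (x c : 'I_n -> R) (D : R) :
  0 < D -> (forall i, i \in S -> [/\ 0 <= x i, x i <= 1 & 0 < c i]) ->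
  \sum_(i in S) c i <= D ->
  (\sum_(i in S) x i) ^+ 2 / D <= \sum_(i in S) x i / c i.
Proof.
move=> D0 hx hc.
set W := \sum_(i in S) x i.
set l := W / D.
have H1 : forall i, i \in S -> 2 * l * x i - l ^+ 2 * (x i * c i) <= x i / c i.
  move=> i iS; have [x0 x1 c0] := hx i iS.
  set y := x i / c i.
  have xy : x i = y * c i by rewrite /y divfK // gt_eqF.
  rewrite xy.
  have y0 : 0 <= y by rewrite /y divr_ge0 // ltW.
  have h : 0 <= y * (1 - l * c i) ^+ 2 by apply: mulr_ge0 => //; apply: sqr_ge0.
  nra.
have H2 : \sum_(i in S) (2 * l * x i - l ^+ 2 * (x i * c i)) <= \sum_(i in S) x i / c i.
  by apply: ler_sum.
rewrite sumrB -mulr_sumr -mulr_sumr in H2.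
have H3 : \sum_(i in S) x i * c i <= D.
  apply: le_trans hc; apply: ler_sum => i iS; have [x0 x1 c0] := hx i iS.
  by rewrite -[X in _ <= X]mul1r; apply: ler_wpM2r => //; apply: ltW.
have H4 : l ^+ 2 * \sum_(i in S) x i * c i <= l ^+ 2 * D.
  by apply: ler_wpM2l => //; apply: sqr_ge0.
have E : W ^+ 2 / D = 2 * l * W - l ^+ 2 * D.
  rewrite /l; field; by rewrite gt_eqF.
rewrite E; apply: le_trans H2; rewrite -/W; lra.
Qed.

Theorem lemma3 (R : rcfType) (n m k : nat)
  (u : 'I_n -> 'I_m -> R) (astar : allocation n m) :
  (0 < k)%N -> (0 < n)%N -> (k < m)%N -> (m <= k * n)%N ->
  (forall i g, 0 <= u i g) ->
  (forall a : allocation n m, USW u a <= USW u astar) ->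
  let S := [set i : 'I_n | (k < #|bundle astar i|)%N] in
  (forall i, i \in S -> 0 < util u i setT /\ util u i setT <= 1) ->
  1 <= \sum_(i in ~: S) util u i (bundle astar i) ->
  let s := -1 + Num.sqrt (1 + (m%:R - 1) / k%:R) in
  USW u astar / max_card_USW k u
    <= (1 + \sum_(i in S) util u i (bundle astar i))
       / (1 + k%:R * \sum_(i in S) (util u i (bundle astar i) / #|bundle astar i|%:R))
  /\
  (1 + \sum_(i in S) util u i (bundle astar i))
       / (1 + k%:R * \sum_(i in S) (util u i (bundle astar i) / #|bundle astar i|%:R))
    <= (1 + s) / (1 + k%:R * s ^+ 2 / (m%:R - 1)).
Proof.
move=> k0 n0 km mkn u0 opt S HS HN s.
have cS : forall i, i \in S -> (k < #|bundle astar i|)%N by move=> i; rewrite inE.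
have x0 : forall i, 0 <= util u i (bundle astar i) by move=> i; apply: sumr_ge0.
have x1 : forall i, i \in S -> util u i (bundle astar i) <= 1.
  move=> i iS; apply: le_trans (proj2 (HS i iS)); apply: util_sub => //; exact: subsetT.
have c0 : forall i, i \in S -> 0 < (#|bundle astar i|%:R : R).
  by move=> i iS; rewrite ltr0n; have := cS i iS; lia.
have ck : forall i, i \in S -> (k%:R : R) <= #|bundle astar i|%:R.
  by move=> i iS; rewrite ler_nat; have := cS i iS; lia.
have EO : USW u astar = \sum_(i in ~: S) util u i (bundle astar i)
                        + \sum_(i in S) util u i (bundle astar i).
  rewrite /USW (bigID (fun i => i \in S)) /= addrC; congr (_ + _).
  by apply: eq_bigl => i; rewrite in_setC.
pose P i (T : {set 'I_m}) := [&& T \subset bundle astar i, (#|T| <= k)%N &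
   (if i \in S then k%:R * util u i (bundle astar i) <= #|bundle astar i|%:R * util u i T
    else T == bundle astar i)].
have exP : forall i, exists T, P i T.
  move=> i; case: (boolP (i \in S)) => iS.
    have cA : #|bundle astar i| = (k + (#|bundle astar i| - k))%N.
      by have := cS i iS; lia.
    have [T [TA cT HT]] := topk R n m u i k k0 (u0 i) _ _ cA.
    exists T; rewrite /P TA cT leqnn iS /=.
    by rewrite -cA in HT.
  exists (bundle astar i); rewrite /P subxx eqxx (negPf iS) andbT /=.
  by move: iS; rewrite inE -leqNgt.
pose T i := odflt set0 [pick T | P i T].
have HT : forall i, P i (T i).
  move=> i; rewrite /T; case: pickP => [T' //|H].
  by have [T' HT'] := exP i; rewrite H in HT'.
pose U := [set g | g \notin T (astar g)].
have Hb : forall i, (#|[set g | (g \notin U) && ((fun g => astar g) g == i)]| <= k)%N.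
  move=> i; apply: leq_trans (_ : (#|T i| <= k)%N); last by have := HT i; rewrite /P => /and3P [].
  apply: subset_leq_card; apply/subsetP => g; rewrite !inE negbK => /andP[gT /eqP E].
  by rewrite -E.
have [a [ca Ha]] := extend n m k mkn #|U| U (fun g => astar g) erefl Hb.
have Tsub : forall i, T i \subset bundle a i.
  move=> i; apply/subsetP => g gT; case/and3P: (HT i) => /subsetP sub _ _.
  have := sub g gT; rewrite inE => /eqP ag.
  rewrite inE Ha ?ag //; by rewrite inE negbK ag.
set WN := \sum_(i in ~: S) util u i (bundle astar i).
set WS := \sum_(i in S) util u i (bundle astar i).
set B := \sum_(i in S) (util u i (bundle astar i) / #|bundle astar i|%:R).
have Hmax : WN + k%:R * B <= max_card_USW k u.
  apply: le_trans (_ : USW u a <= _); last first.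
    by rewrite /max_card_USW; apply: le_bigmax_cond.
  apply: le_trans (_ : \sum_(i < n) util u i (T i) <= _); last first.
    by apply: ler_sum => i _; apply: util_sub => //; exact: Tsub.
  rewrite (bigID (fun i => i \in S)) /= addrC; apply: lerD.
    have EN : \sum_(i < n | i \notin S) util u i (T i)
            = \sum_(i < n | i \notin S) util u i (bundle astar i).
      apply: eq_bigr => i iS.
      by have := HT i; rewrite /P (negPf iS) => /and3P [_ _ /eqP ->].
    rewrite EN le_eqVlt; apply/orP; left; apply/eqP.
    by apply: eq_bigl => i; rewrite in_setC.
  rewrite /B mulr_sumr; apply: ler_sum => i iS.
  have iS2 : i \in S := iS.
  have := HT i; rewrite /P iS2 => /and3P [_ _ H].
  rewrite mulrA ler_pdivrMr; last exact: c0.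
  by rewrite [X in _ <= X]mulrC.
have B0 : 0 <= B by apply: sumr_ge0 => i iS; apply: divr_ge0 => //; apply: ltW; apply: c0.
have BW : k%:R * B <= WS.
  rewrite /B mulr_sumr; apply: ler_sum => i iS.
  rewrite mulrA ler_pdivrMr; last exact: c0.
  rewrite mulrC; apply: ler_wpM2l => //; exact: ck.
have Hcnt : (\sum_(i in S) #|bundle astar i| < m)%N.
  have -> : (\sum_(i in S) #|bundle astar i| =
             \sum_(i in S) #|[set g | predT g && ((fun g => astar g) g == i)]|)%N.
    by apply: eq_bigr => i _; apply: eq_card => g; rewrite !inE.
  rewrite (count_part n m (fun g => astar g) (mem S) predT).
  case: (boolP [exists g, astar g \notin S]) => [/existsP [g0 hg0]|].
    have H2 : (#|[set g | predT g && (mem S) (astar g)]| <= #|[set~ g0]|)%N.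
      apply: subset_leq_card; apply/subsetP => g; rewrite !inE /=.
      move=> Hg; apply/eqP => E; move: hg0; by rewrite -E inE Hg.
    rewrite cardsC1 card_ord in H2.
    have : (m > 0)%N by apply: leq_ltn_trans (ltn_ord g0).
    move=> ?; apply: leq_ltn_trans H2 _; lia.
  rewrite negb_exists => /forallP Hall.
  have : WN = 0.
    apply: big1 => i; rewrite inE => iS.
    have -> : bundle astar i = set0.
      apply/setP => g; rewrite !inE; apply/negP => /eqP E.
      by move: (Hall g); rewrite E iS.
    by rewrite /util big_set0.
  move=> WN0; move: HN; rewrite -/WN WN0 ler10 //.
have D0 : 0 < (m%:R - 1 : R) by rewrite subr_gt0 ltr1n; lia.
have hc : \sum_(i in S) (#|bundle astar i|%:R : R) <= m%:R - 1.
  rewrite -natr_sum -(natrB _ (_ : (1 <= m)%N)); last by lia.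
  by rewrite ler_nat; lia.
split.
  rewrite EO; apply: alg1 => //; by apply: mulr_ge0.
apply: alg2 => //.
- by rewrite ltr0n.
- by apply: sumr_ge0.
- rewrite -mulrA; apply: ler_wpM2l => //.
  apply: (sum_lb R n S (fun i => util u i (bundle astar i)) (fun i => #|bundle astar i|%:R)) => //.
  by move=> i iS; split => //; [exact: x1 | exact: c0].
- have -> : 1 + s = Num.sqrt (1 + (m%:R - 1) / k%:R) by rewrite /s addrA subrr add0r.
  rewrite sqr_sqrtr //; apply: addr_ge0 => //; apply: divr_ge0 => //; exact: ltW.
- have -> : 1 + s = Num.sqrt (1 + (m%:R - 1) / k%:R) by rewrite /s addrA subrr add0r.
  exact: sqrtr_ge0.
Qed.
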